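(* Let $u$ be a solution of the Degasperis–Procesi equation in the class $C^0([0,T);H^4(\mathbb{R}))\cap C^1([0,T);H^3(\mathbb{R}))$ and let $\omega_1,\omega_2,\omega_3$ be the one-forms below built from $u$. Consider the system, for unknown functions $\Gamma(x,t)$ and $\gamma(x,t)$, $$-2\,d\Gamma=\omega_3+\omega_2-2\Gamma\omega_1+\Gamma^2(\omega_3-\omega_2),\qquad 2\,d\gamma=\omega_3-\omega_2-2\gamma\omega_1+\gamma^2(\omega_3+\omega_2).$$ Then this system is completely integrable, and for its solutions the one-forms $$\theta=\omega_1-\Gamma(\omega_3-\omega_2),\qquad \hat\theta=-\omega_1+\gamma(\omega_3+\omega_2)$$ are closed on the solutions of the Degasperis–Procesi equation.
   Context: Degasperis–Procesi equation: $u_t-u_{txx}+4uu_x=3u_xu_{xx}+uu_{xxx}$. With $m=u-u_{xx}$, $F=u_x^2-2uu_x+uu_{xx}$, real $\mu$ and a fixed sign choice (upper signs together or lower together): $\omega_1=m\,dx+F\,dt$, $\omega_2=(\mu m\pm2\sqrt{1+\mu^2})dx+\mu F\,dt$, $\omega_3=(\pm\sqrt{1+\mu^2}\,m+2\mu)dx\pm\sqrt{1+\mu^2}\,F\,dt$. On solutions these satisfy $d\omega_1=\omega_3\wedge\omega_2$, $d\omega_2=\omega_1\wedge\omega_3$, $d\omega_3=\omega_1\wedge\omega_2$. *)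

(* Defs.v *)
From Stdlib Require Import Reals.
From Coquelicot Require Import Coquelicot.
Open Scope R_scope.

Definition px (f : R -> R -> R) (x t : R) : R := Derive (fun y => f y t) x.
Definition pt (f : R -> R -> R) (x t : R) : R := Derive (fun s => f x s) t.

Record form := mkForm { fdx : R -> R -> R ; fdt : R -> R -> R }.

Definition m_of (u : R -> R -> R) (x t : R) : R := u x t - px (px u) x t.
Definition F_of (u : R -> R -> R) (x t : R) : R :=
  (px u x t) ^ 2 - 2 * u x t * px u x t + u x t * px (px u) x t.

(** The one-forms omega_1, omega_2, omega_3; the sign choice (upper / lower
    signs together) is encoded by eps in {1,-1}. *)
Definition omega1 (u : R -> R -> R) : form := mkForm (m_of u) (F_of u).
Definition omega2 (u : R -> R -> R) (mu eps : R) : form :=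
  mkForm (fun x t => mu * m_of u x t + 2 * eps * sqrt (1 + mu ^ 2))
         (fun x t => mu * F_of u x t).
Definition omega3 (u : R -> R -> R) (mu eps : R) : form :=
  mkForm (fun x t => eps * sqrt (1 + mu ^ 2) * m_of u x t + 2 * mu)
         (fun x t => eps * sqrt (1 + mu ^ 2) * F_of u x t).

Definition region (T x t : R) : Prop := 0 < t < T.

(** u is a (classical) solution of the Degasperis–Procesi equation
    u_t - u_txx + 4 u u_x = 3 u_x u_xx + u u_xxx on R x (0,T), with exactly the
    classical derivatives guaranteed by u in C^0([0,T);H^4) ∩ C^1([0,T);H^3):
    u, u_x, u_xx, u_xxx, u_t and u_txx = (u_xx)_t. *)
Definition DP_solution (T : R) (u : R -> R -> R) : Prop :=
  forall x t, region T x t ->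
    ex_derive (fun y => u y t) x /\
    ex_derive (fun y => px u y t) x /\
    ex_derive (fun y => px (px u) y t) x /\
    ex_derive (fun s => u x s) t /\
    ex_derive (fun s => px (px u) x s) t /\
    pt u x t - pt (px (px u)) x t + 4 * u x t * px u x t
      = 3 * px u x t * px (px u) x t + u x t * px (px (px u)) x t.

(** Complete integrability (Frobenius condition) of the first-order system
    Y_x = f(x,t,Y), Y_t = g(x,t,Y) on a region D: the compatibility condition
    f_t + f_Y g = g_x + g_Y f holds identically in (x,t,Y). *)
Definition completely_integrable (D : R -> R -> Prop)
    (f g : R -> R -> R -> R) : Prop :=
  forall x t y, D x t ->
    ex_derive (fun s => f x s y) t /\ ex_derive (fun z => f x t z) y /\
    ex_derive (fun s => g s t y) x /\ ex_derive (fun z => g x t z) y /\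
    Derive (fun s => f x s y) t + Derive (fun z => f x t z) y * g x t y
      = Derive (fun s => g s t y) x + Derive (fun z => g x t z) y * f x t y.

Definition solves_system (D : R -> R -> Prop) (f g : R -> R -> R -> R)
    (Y : R -> R -> R) : Prop :=
  forall x t, D x t ->
    ex_derive (fun y => Y y t) x /\ ex_derive (fun s => Y x s) t /\
    px Y x t = f x t (Y x t) /\ pt Y x t = g x t (Y x t).

Definition closed_form (D : R -> R -> Prop) (w : form) : Prop :=
  forall x t, D x t ->
    ex_derive (fun s => fdx w x s) t /\ ex_derive (fun y => fdt w y t) x /\
    Derive (fun s => fdx w x s) t = Derive (fun y => fdt w y t) x.

(** -2 dΓ = ω3 + ω2 - 2Γ ω1 + Γ^2 (ω3 - ω2), componentwise (sel = fdx or fdt). *)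
Definition Gamma_rhs (sel : form -> R -> R -> R) (w1 w2 w3 : form)
    (x t G : R) : R :=
  - (1/2) * (sel w3 x t + sel w2 x t - 2 * G * sel w1 x t
             + G ^ 2 * (sel w3 x t - sel w2 x t)).

(** 2 dγ = ω3 - ω2 - 2γ ω1 + γ^2 (ω3 + ω2), componentwise. *)
Definition gamma_rhs (sel : form -> R -> R -> R) (w1 w2 w3 : form)
    (x t g : R) : R :=
  (1/2) * (sel w3 x t - sel w2 x t - 2 * g * sel w1 x t
           + g ^ 2 * (sel w3 x t + sel w2 x t)).

Definition theta (w1 w2 w3 : form) (G : R -> R -> R) : form :=
  mkForm (fun x t => fdx w1 x t - G x t * (fdx w3 x t - fdx w2 x t))
         (fun x t => fdt w1 x t - G x t * (fdt w3 x t - fdt w2 x t)).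
Definition theta_hat (w1 w2 w3 : form) (g : R -> R -> R) : form :=
  mkForm (fun x t => - fdx w1 x t + g x t * (fdx w3 x t + fdx w2 x t))
         (fun x t => - fdt w1 x t + g x t * (fdt w3 x t + fdt w2 x t)).

(* Main.v *)
Require Import Defs.
From Stdlib Require Import Reals Lra Psatz.
From Coquelicot Require Import Coquelicot.
Open Scope R_scope.

Ltac isbase f := match f with
 | (fun _ => ?h _ _) => is_var h
 | (fun _ => px _ _ _) => idtac end.

Ltac rwD := repeat match goal with
 | |- context [Derive ?f ?p] =>
    tryif isbase f then fail else
    rewrite (is_derive_unique f p _ ltac:(auto_derive; [intuition | reflexivity]))
end.

Ltac chg u x t :=
  change (Derive (fun x0 => u x x0) t) with (pt u x t);
  change (Derive (fun x0 => px (px u) x x0) t) with (pt (px (px u)) x t);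
  change (Derive (fun x0 => u x0 t) x) with (px u x t);
  change (Derive (fun x0 => px u x0 t) x) with (px (px u) x t);
  change (Derive (fun x0 => px (px u) x0 t) x) with (px (px (px u)) x t).

Ltac fin u x t S mu eps K c :=
  match goal with H: pt u x t = _ |- _ => rewrite H end;
  let F := constr:(px u x t ^ 2 - 2 * u x t * px u x t + u x t * px (px u) x t) in
  apply Rminus_diag_uniq;
  first [ transitivity (c*F*(eps*eps*(S*S) - (1+mu^2))); [field | rewrite K; ring]
        | transitivity (-c*F*(eps*eps*(S*S) - (1+mu^2))); [field | rewrite K; ring]
        | transitivity (2*c*F*(eps*eps*(S*S) - (1+mu^2))); [field | rewrite K; ring]
        | transitivity (-2*c*F*(eps*eps*(S*S) - (1+mu^2))); [field | rewrite K; ring]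
        | transitivity (4*c*F*(eps*eps*(S*S) - (1+mu^2))); [field | rewrite K; ring]
        | transitivity (-4*c*F*(eps*eps*(S*S) - (1+mu^2))); [field | rewrite K; ring]
        | transitivity (c/2*F*(eps*eps*(S*S) - (1+mu^2))); [field | rewrite K; field]
        | transitivity (-c/2*F*(eps*eps*(S*S) - (1+mu^2))); [field | rewrite K; field] ].

Ltac prep u mu eps Heps Hdp x t :=
  let e1 := fresh in let e2 := fresh in let e3 := fresh in
  let e4 := fresh in let e5 := fresh in let Heq := fresh in
  destruct (Hdp x t) as [e1 [e2 [e3 [e4 [e5 Heq]]]]]; [assumption|];
  assert (HS : sqrt (1 + mu^2) * sqrt (1 + mu^2) = 1 + mu^2)
    by (apply sqrt_sqrt; pose proof (pow2_ge_0 mu); lra);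
  assert (He : eps * eps = 1) by (destruct Heps; subst; ring);
  assert (Hpt : pt u x t = pt (px (px u)) x t - 4 * u x t * px u x t +
    3 * px u x t * px (px u) x t + u x t * px (px (px u)) x t) by lra.

Opaque px.

Theorem proposition8p1 (T mu eps : R) (u : R -> R -> R) :
  (eps = 1 \/ eps = -1) ->
  DP_solution T u ->
  let w1 := omega1 u in
  let w2 := omega2 u mu eps in
  let w3 := omega3 u mu eps in
  completely_integrable (region T)
    (Gamma_rhs fdx w1 w2 w3) (Gamma_rhs fdt w1 w2 w3) /\
  completely_integrable (region T)
    (gamma_rhs fdx w1 w2 w3) (gamma_rhs fdt w1 w2 w3) /\
  (forall Gam : R -> R -> R,
     solves_system (region T) (Gamma_rhs fdx w1 w2 w3) (Gamma_rhs fdt w1 w2 w3) Gam ->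
     closed_form (region T) (theta w1 w2 w3 Gam)) /\
  (forall gam : R -> R -> R,
     solves_system (region T) (gamma_rhs fdx w1 w2 w3) (gamma_rhs fdt w1 w2 w3) gam ->
     closed_form (region T) (theta_hat w1 w2 w3 gam)).
Proof.
intros Heps Hdp w1 w2 w3.
subst w1 w2 w3.
split; [|split; [|split]].
- intros x t y Hr. prep u mu eps Heps Hdp x t.
  unfold Gamma_rhs, omega1, omega2, omega3, m_of, F_of; cbv beta iota delta [fdx fdt].
  remember (sqrt (1 + mu^2)) as S eqn:HeqS. clear HeqS.
  assert (K : eps*eps*(S*S) = 1+mu^2) by (rewrite He, HS; ring).
  repeat split; try (auto_derive; intuition; fail).
  rwD. chg u x t. fin u x t S mu eps K y.
- intros x t y Hr. prep u mu eps Heps Hdp x t.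
  unfold gamma_rhs, omega1, omega2, omega3, m_of, F_of; cbv beta iota delta [fdx fdt].
  remember (sqrt (1 + mu^2)) as S eqn:HeqS. clear HeqS.
  assert (K : eps*eps*(S*S) = 1+mu^2) by (rewrite He, HS; ring).
  repeat split; try (auto_derive; intuition; fail).
  rwD. chg u x t. fin u x t S mu eps K y.
- intros Gam Hsol x t Hr. prep u mu eps Heps Hdp x t.
  destruct (Hsol x t Hr) as [g1 [g2 [gx gt]]].
  unfold theta, Gamma_rhs, omega1, omega2, omega3, m_of, F_of in *;
    cbv beta iota delta [fdx fdt] in *.
  remember (sqrt (1 + mu^2)) as S eqn:HeqS. clear HeqS.
  assert (K : eps*eps*(S*S) = 1+mu^2) by (rewrite He, HS; ring).
  repeat split; try (auto_derive; intuition; fail).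
  rwD. chg u x t.
  change (Derive (fun x0 => Gam x x0) t) with (pt Gam x t).
  change (Derive (fun x0 => Gam x0 t) x) with (px Gam x t).
  rewrite gx, gt. fin u x t S mu eps K 1.
- intros Gam Hsol x t Hr. prep u mu eps Heps Hdp x t.
  destruct (Hsol x t Hr) as [g1 [g2 [gx gt]]].
  unfold theta_hat, gamma_rhs, omega1, omega2, omega3, m_of, F_of in *;
    cbv beta iota delta [fdx fdt] in *.
  remember (sqrt (1 + mu^2)) as S eqn:HeqS. clear HeqS.
  assert (K : eps*eps*(S*S) = 1+mu^2) by (rewrite He, HS; ring).
  repeat split; try (auto_derive; intuition; fail).
  rwD. chg u x t.
  change (Derive (fun x0 => Gam x x0) t) with (pt Gam x t).
  change (Derive (fun x0 => Gam x0 t) x) with (px Gam x t).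
  rewrite gx, gt. fin u x t S mu eps K 1.
Qed.
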